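(* For every weak composition $a$, $\mathfrak{F}_a=\sum_{S\in\mathfrak{F}\mathrm{SSF}(a)}x^{\mathrm{wt}(S)}$.
   Context: Weak composition of length $n$: sequence of $n$ nonnegative integers; $\mathrm{flat}(a)$ deletes zero parts; $b\ge a$ means $b_1+\cdots+b_i\ge a_1+\cdots+a_i$ for all $i$. $\mathfrak{F}_a=\sum x^b$ over weak compositions $b$ of length $n$ with $b\ge a$ and $\mathrm{flat}(b)$ refining $\mathrm{flat}(a)$ (i.e. $\mathrm{flat}(a)$ is obtained by summing consecutive parts of $\mathrm{flat}(b)$). $D(a)$: $a_i$ left-justified boxes in row $i$, row 1 lowest. For a filling $S$, $\mathrm{wt}(S)_i$ is the number of entries $i$. Triples (rows $r<s$): Type A: $\gamma=(r,c),\alpha=(r,c+1),\beta=(s,c+1)$ with $a_r\ge a_s$; Type B: $\gamma=(s,c),\alpha=(s,c+1),\beta=(r,c)$ with $a_s>a_r$; inversion triple: $\beta>\gamma\ge\alpha$ or $\gamma\ge\alpha>\beta$. A semi-skyline filling of $D(a)$: positive integer entries, rows weakly decreasing left to right, distinct entries in each column, all triples inversion triples. $\mathfrak{F}\mathrm{SSF}(a)$: semi-skyline fillings of $D(a)$ in which each first-column entry is at most its row index and, whenever box $B$ is in a higher row than box $B'$, the entry of $B$ is strictly larger than that of $B'$. *)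

(* Defs.v *)
From mathcomp Require Import all_boot all_order all_algebra.
From mathcomp Require Import ssrcomplements freeg mpoly.
From mathcomp Require Import boolp.
Set Implicit Arguments.
Unset Strict Implicit.
Unset Printing Implicit Defensive.
Import GRing.Theory.

(* Weak compositions of length n are n-tuples of nat (viewed as seq nat).
   Row/column indices below are 0-indexed: row r here is row r+1 of the paper. *)

Definition flat (s : seq nat) : seq nat := filter (fun x => x != 0%N) s.

Definition dom_ge (b a : seq nat) : Prop :=
  forall i : nat, (i <= size a)%N -> (sumn (take i a) <= sumn (take i b))%N.

(* c refines d : d is obtained by summing consecutive (nonempty) blocks of
   parts of c. *)
Definition refines (c d : seq nat) : Prop :=
  exists r : seq nat,
    [/\ all (fun k => 0 < k)%N r, sumn r = size c & map sumn (reshape r c) = d].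

(* The polynomial F_a = sum of x^b over weak compositions b of length n with
   b >= a and flat(b) refining flat(a).  Such b have |b| = |a| (dominance
   gives |b| >= |a|, refinement gives |b| = |a|), so summing over the finite
   type of monomials of degree < |a|+1 loses no term. *)
Definition slide_cond n (a : n.-tuple nat) (b : 'X_{1..n}) : bool :=
  `[< dom_ge (val b) a /\ refines (flat (val b)) (flat a) >].

Definition slide_poly n (a : n.-tuple nat) : {mpoly int[n]} :=
  \sum_(b : 'X_{1..n < (sumn a).+1} | slide_cond a b) 'X_[b].

(* A filling is a list of rows; row r (0-indexed, bottom row first) lists the
   entries of its a_r boxes from left to right. *)
Definition filling := seq (seq nat).

Definition entry (S : filling) (r c : nat) : nat := nth 0%N (nth [::] S r) c.

Definition has_shape n (a : n.-tuple nat) (S : filling) : Prop :=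
  size S = n /\ forall r, (r < n)%N -> size (nth [::] S r) = nth 0%N a r.

Definition inD (a : seq nat) (r c : nat) : bool := (r < size a)%N && (c < nth 0%N a r)%N.

Definition wt n (S : filling) : 'X_{1..n} :=
  [multinom count_mem i.+1 (flatten S) | i < n].

Definition inversion_triple (g al be : nat) : Prop :=
  (g < be /\ al <= g)%N \/ (be < al /\ al <= g)%N.

(* Triples: rows r < s, all three boxes in D(a).
   Type A: gamma=(r,c), alpha=(r,c+1), beta=(s,c+1), with a_r >= a_s.
   Type B: gamma=(s,c), alpha=(s,c+1), beta=(r,c), with a_s > a_r. *)
Definition triples_inversion (a : seq nat) (S : filling) : Prop :=
  forall r s c, (r < s)%N ->
    ((nth 0%N a s <= nth 0%N a r)%N ->
       inD a r c -> inD a r c.+1 -> inD a s c.+1 ->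
       inversion_triple (entry S r c) (entry S r c.+1) (entry S s c.+1)) /\
    ((nth 0%N a r < nth 0%N a s)%N ->
       inD a s c -> inD a s c.+1 -> inD a r c ->
       inversion_triple (entry S s c) (entry S s c.+1) (entry S r c)).

Definition semi_skyline n (a : n.-tuple nat) (S : filling) : Prop :=
  [/\ has_shape a S,
      (forall r c, inD a r c -> 0 < entry S r c)%N,
      (forall r c, inD a r c.+1 -> entry S r c.+1 <= entry S r c)%N,
      (forall r s c, inD a r c -> inD a s c -> r <> s -> entry S r c <> entry S s c)
    & triples_inversion a S].

Definition FSSF n (a : n.-tuple nat) (S : filling) : Prop :=
  [/\ semi_skyline a S,
      (forall r, inD a r 0 -> entry S r 0 <= r.+1)%N
    &
      (forall r c s d, inD a r c -> inD a s d -> (s < r)%N -> entry S s d < entry S r c)%N].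

(* Main.v *)
Require Import Defs.
From mathcomp Require Import all_boot all_order all_algebra.
From mathcomp Require Import ssrcomplements freeg mpoly.
From mathcomp Require Import boolp zify.
Set Implicit Arguments.
Unset Strict Implicit.
Unset Printing Implicit Defensive.

Definition PS (s : seq nat) (x : nat) : Prop := exists j, x = sumn (take j s).

Lemma ps_flat1 s j : exists j', sumn (take j s) = sumn (take j' (flat s)).
Proof.
elim: s j => [|x s IH] j; first by exists 0; rewrite take0.
case: j => [|j]; first by exists 0; rewrite !take0.
have [j' Hj] := IH j; rewrite /flat /=.
case: eqP => [->|_]; first by exists j'.
by exists j'.+1 => /=; rewrite Hj.
Qed.

Lemma ps_flat2 s j : exists j', sumn (take j (flat s)) = sumn (take j' s).
Proof.
elim: s j => [|x s IH] j; first by exists 0; rewrite take0.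
rewrite /flat /=; case: eqP => [->|_].
  by have [j' Hj] := IH j; exists j'.+1 => /=; rewrite Hj.
case: j => [|j]; first by exists 0; rewrite !take0.
by have [j' Hj] := IH j; exists j'.+1 => /=; rewrite Hj.
Qed.

Lemma ps_flat s x : PS (flat s) x <-> PS s x.
Proof.
split=> [[j ->]|[j ->]].
  by have [j' ->] := ps_flat2 s j; exists j'.
by have [j' ->] := ps_flat1 s j; exists j'.
Qed.

Lemma sumn_flat s : sumn (flat s) = sumn s.
Proof. by elim: s => //= x s IH; rewrite /flat /=; case: eqP => [->|] //=; rewrite -IH. Qed.

Lemma flat_pos s : all (fun k => 0 < k) (flat s).
Proof. by elim: s => //= x s IH; rewrite /flat /=; case: eqP => //= /eqP; rewrite lt0n => ->. Qed.

Lemma take_reshape (r c : seq nat) j :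
  sumn (take j (map sumn (reshape r c))) = sumn (take (sumn (take j r)) c).
Proof.
elim: r c j => [|k r IH] c j; first by rewrite !take0.
case: j => [|j]; first by rewrite !take0.
by rewrite /= IH takeD sumn_cat.
Qed.

Lemma ps_strict (c : seq nat) j k : all (fun k => 0 < k) c -> j < k <= size c ->
  sumn (take j c) < sumn (take k c).
Proof.
move=> /all_nthP Hp /andP[jk ks].
have -> : k = j + (k - j) by lia.
rewrite takeD sumn_cat -[X in X < _]addn0 ltn_add2l.
have jc : j < size c by lia.
rewrite (drop_nth 0 jc); case E: (k - j) => [|m]; first by lia.
rewrite /=; have := Hp 0 j jc; lia.
Qed.

Lemma refines_iff c d : all (fun k => 0 < k) c -> all (fun k => 0 < k) d ->
  refines c d <-> sumn c = sumn d /\ (forall x, PS d x -> PS c x).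
Proof.
move=> Pc Pd; split.
  case=> r [Pr Sr Er]; split.
    have := take_reshape r c (size r).
    by rewrite take_oversize ?size_map ?size_reshape // take_size Sr take_size Er.
  by move=> x [j ->]; rewrite -Er take_reshape; eexists.
elim: d c Pc Pd => [|x d IH] c Pc Pd [Hs Hps].
  exists [::]; split => //=; clear Hps; case: c Pc Hs => //= y c /andP[]; lia.
have [k Hk] : PS c x by apply: Hps; exists 1; rewrite /= take0 addn0.
move: Pd => /= /andP[x0 Pd].
have {Hk} [k' [Hk' k's k'0]] : exists k', [/\ x = sumn (take k' c), k' <= size c & 0 < k'].
  exists (minn k (size c)); split; first by rewrite Hk; case: (leqP k (size c)) => h //; rewrite take_size take_oversize // ltnW.
  - by rewrite geq_minr.
  case: k Hk => [|k]; first by rewrite take0 => /=; lia.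

  move=> Hk; move: Hk; clear Hps Hs Pc; case: c => [|y c] /=; lia.
have Pc' : all (fun k => 0 < k) (drop k' c) by apply/allP => y /mem_drop /(allP Pc).
have Hs' : sumn (drop k' c) = sumn d.
  by move: Hs; rewrite -{1}(cat_take_drop k' c) sumn_cat -Hk' /=; lia.
have Hps' : forall y, PS d y -> PS (drop k' c) y.
  move=> y [j Hj]; have [j2 Hj2] : PS c (x + y) by apply: Hps; exists j.+1; rewrite /= Hj.
  have j2k : k' <= j2.
    rewrite leqNgt; apply/negP => lt.
    have := ps_strict Pc (j:=j2) (k:=k'); rewrite lt k's -Hj2 -Hk' => /(_ isT); lia.
  exists (j2 - k'); move: Hj2; rewrite -{1}(subnKC j2k) takeD sumn_cat -Hk'; lia.
have [r [Pr Sr Er]] := IH _ Pc' Pd (conj Hs' Hps').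
exists (k' :: r); split => /=.
- by rewrite k'0.
- by rewrite Sr size_drop; lia.
- by rewrite -Hk' Er.
Qed.

Fixpoint wordf (m : nat) (b : seq nat) : seq nat :=
  if b is x :: b' then nseq x m ++ wordf m.+1 b' else [::].

Lemma size_wordf m b : size (wordf m b) = sumn b.
Proof. by elim: b m => //= x b IH m; rewrite size_cat size_nseq IH. Qed.

Lemma wordf_ge m b y : y \in wordf m b -> m <= y.
Proof.
elim: b m => //= x b IH m; rewrite mem_cat => /orP[/nseqP[-> _] //|].
by move/IH; lia.
Qed.

Lemma count_wordf b m y :
  count_mem y (wordf m b) = if m <= y then nth 0 b (y - m) else 0.
Proof.
elim: b m => [|x b IH] m /=; first by case: ifP => //; rewrite nth_nil.
rewrite count_cat IH count_nseq /=.
case: (ltngtP m y) => H.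
- have -> : y - m = (y - m.+1).+1 by lia.
  by rewrite /= mul0n.
- by rewrite mul0n.
- by rewrite H subnn /= mul1n addn0.
Qed.

Lemma nth_wordf_le b m i k : i < sumn b ->
  (nth 0 (wordf m.+1 b) i <= m + k) = (i < sumn (take k b)).
Proof.
elim: b m i k => [|x b IH] m i k //= Hi.
rewrite nth_cat size_nseq.
case: ltnP => Hx.
  rewrite nth_nseq Hx; case: k => [|k] /=; lia.
case: k => [|k].
  rewrite take0 /= addn0; apply/negbTE; rewrite -ltnNge.
  have Hs : i - x < size (wordf m.+2 b) by rewrite size_wordf; lia.
  by have := wordf_ge (mem_nth 0 Hs); apply: ltnW.
rewrite /= addnS -addSn IH; lia.
Qed.

Lemma w_le b i k : i < sumn b -> (nth 0 (wordf 1 b) i <= k) = (i < sumn (take k b)).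
Proof. by move=> Hi; rewrite -(nth_wordf_le 0 k Hi). Qed.

Lemma w_pos b i : i < sumn b -> 0 < nth 0 (wordf 1 b) i.
Proof. by move=> Hi; rewrite lt0n -leqn0 w_le // take0. Qed.

Lemma w_mono b i j : i <= j -> j < sumn b -> nth 0 (wordf 1 b) i <= nth 0 (wordf 1 b) j.
Proof.
move=> ij jb; rewrite w_le; last by lia.
have := leqnn (nth 0 (wordf 1 b) j); rewrite w_le //; lia.
Qed.

Lemma w_sorted b : sorted leq (wordf 1 b).
Proof.
rewrite sorted_pairwise; last by move=> ???; apply: leq_trans.
apply/(pairwiseP 0) => i j; rewrite !inE size_wordf => Hi Hj ij.
by apply: w_mono => //; apply: ltnW.
Qed.

Definition ps (a : seq nat) r := sumn (take r a).
Definition fillb (a : seq nat) (T : seq nat) : filling := map rev (reshape a T).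

Lemma ps_succ (a : seq nat) r : r < size a -> ps a r.+1 = ps a r + nth 0 a r.
Proof. by move=> h; rewrite /ps (take_nth 0) // sumn_rcons. Qed.

Lemma ps_mono (a : seq nat) r r' : r <= r' -> ps a r <= ps a r'.
Proof. by move=> h; rewrite /ps -(subnKC h) takeD sumn_cat leq_addr. Qed.

Lemma ps_le_sum (a : seq nat) r : ps a r <= sumn a.
Proof. by rewrite /ps -{2}(cat_take_drop r a) sumn_cat leq_addr. Qed.

Lemma ps_size (a : seq nat) : ps a (size a) = sumn a.
Proof. by rewrite /ps take_size. Qed.

Lemma ps_over (a : seq nat) r : size a <= r -> ps a r = sumn a.
Proof. by move=> h; rewrite /ps take_oversize. Qed.

Lemma entry_fill (a : seq nat) T r c : r < size a -> c < nth 0 a r -> sumn a <= size T ->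
  entry (fillb a T) r c = nth 0 T (ps a r + (nth 0 a r - c.+1)).
Proof.
move=> ra ca aT.
have h1 := ps_succ ra; have h2 := ps_le_sum a r.+1.
rewrite /entry /fillb (nth_map [::]) ?size_reshape // nth_reshape -/(ps a r).
have Hs : size (take (nth 0 a r) (drop (ps a r) T)) = nth 0 a r.
  by rewrite size_takel // size_drop; lia.
by rewrite nth_rev Hs // nth_take; [rewrite nth_drop | lia].
Qed.

Lemma locate (a : seq nat) r i : i < ps a r ->
  exists s, [/\ s < r, s < size a & ps a s <= i < ps a s.+1].
Proof.
elim: r => [|r IH]; first by rewrite /ps take0.
move=> H; case: (ltnP i (ps a r)) => H2.
  by have [s [s1 s2 s3]] := IH H2; exists s; split => //; lia.
exists r; split => //.
  rewrite ltnNge; apply/negP => ra.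
  by move: H H2; rewrite (ps_over ra) (ps_over (leqW ra)); lia.
by rewrite H2 H.
Qed.

Lemma shape_fill n (a : n.-tuple nat) T : size T = sumn a -> has_shape a (fillb a T).
Proof.
move=> sT; split; first by rewrite size_map size_reshape size_tuple.
move=> r rn; have ra : r < size a by rewrite size_tuple.
have h1 := ps_succ ra; have h2 := ps_le_sum a r.+1.
rewrite (nth_map [::]) ?size_reshape // size_rev nth_reshape -/(ps a r).
by rewrite size_takel // size_drop; lia.
Qed.

Lemma loc_fill n (a : n.-tuple nat) T i : size T = sumn a -> i < sumn a ->
  exists s c, [/\ inD a s c, nth 0 T i = entry (fillb a T) s c,
                  ps a s <= i < ps a s.+1 & i = ps a s + (nth 0 a s - c.+1)].
Proof.
move=> sT iN; rewrite -ps_size in iN.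
have [s [_ sa /andP[i1 i2]]] := locate iN.
have h1 := ps_succ sa.
exists s, (ps a s.+1 - i.+1).
have ca : ps a s.+1 - i.+1 < nth 0 a s by lia.
have ei : i = ps a s + (nth 0 a s - (ps a s.+1 - i.+1).+1) by lia.
split => //; first by rewrite /inD sa ca.
- by rewrite entry_fill // ?sT // -ei.
- by rewrite i1 i2.
Qed.

Lemma row_le n (a : n.-tuple nat) S r c c' :
  (forall r c, inD a r c.+1 -> entry S r c.+1 <= entry S r c) ->
  inD a r c' -> c <= c' -> entry S r c' <= entry S r c.
Proof.
move=> Hd; elim: c' => [|c' IH] Hc le.
  by move: le; rewrite leqn0 => /eqP ->.
case: (eqVneq c c'.+1) => [-> //|ne].
have Hc' : inD a r c' by move: Hc; rewrite /inD => /andP[-> h]; apply: ltnW.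
apply: leq_trans (Hd _ _ Hc) (IH Hc' _); lia.
Qed.

Lemma FSSF_of n (a : n.-tuple nat) S :
  has_shape a S ->
  (forall r c, inD a r c -> 0 < entry S r c) ->
  (forall r c, inD a r c.+1 -> entry S r c.+1 <= entry S r c) ->
  (forall r, inD a r 0 -> entry S r 0 <= r.+1) ->
  (forall r c s d, inD a r c -> inD a s d -> s < r -> entry S s d < entry S r c) ->
  FSSF a S.
Proof.
move=> Hsh Hpos Hdec Hfirst Hstr; split => //; split => //.
- move=> r s c Hr Hs rs.
  case: (ltngtP r s) => h.
  + by have := Hstr _ _ _ _ Hs Hr h; lia.
  + by have := Hstr _ _ _ _ Hr Hs h; lia.
  + by [].
- move=> r s c rs; split.
  + move=> _ Hr Hr1 Hs1; left; split; [exact: Hstr _ _ _ _ Hs1 Hr rs | exact: Hdec].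
  + move=> _ Hs Hs1 Hr; right; split; [exact: Hstr _ _ _ _ Hs1 Hr rs | exact: Hdec].
Qed.

Lemma idx_bound (a : seq nat) r c : r < size a -> c < nth 0 a r ->
  ps a r + (nth 0 a r - c.+1) < ps a r.+1.
Proof. by move=> ra ca; rewrite ps_succ //; lia. Qed.

Lemma fill_FSSF n (a : n.-tuple nat) (b : seq nat) :
  sumn b = sumn a -> dom_ge b a -> (forall x, PS a x -> PS b x) ->
  FSSF a (fillb a (wordf 1 b)).
Proof.
move=> Sb Hdom Hps.
have sT : size (wordf 1 b) = sumn a by rewrite size_wordf.
have E : forall r c, inD a r c ->
  entry (fillb a (wordf 1 b)) r c = nth 0 (wordf 1 b) (ps a r + (nth 0 a r - c.+1))
  /\ ps a r + (nth 0 a r - c.+1) < sumn b.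
  move=> r c /andP[ra ca]; split; first by rewrite entry_fill // sT.
  by have := idx_bound ra ca; have := ps_le_sum a r.+1; lia.
apply: FSSF_of.
- exact: shape_fill.
- by move=> r c /E[-> h]; apply: w_pos.
- move=> r c Hc.
  have Hc' : inD a r c by move: Hc; rewrite /inD => /andP[-> h]; apply: ltnW.
  have [-> h1] := E _ _ Hc; have [-> h2] := E _ _ Hc'.
  apply: w_mono => //; move: Hc => /andP[_ h]; lia.
- move=> r Hr; have [-> h1] := E _ _ Hr.
  move: Hr => /andP[ra ca].
  rewrite w_le //.
  have := Hdom r.+1 ra; rewrite -/(ps a r.+1) ps_succ //; lia.
- move=> r c s d Hr Hs sr.
  have [-> h1] := E _ _ Hr; have [-> h2] := E _ _ Hs.
  have [k Hk] := Hps (ps a r) (ex_intro _ r erefl).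
  move: Hr Hs => /andP[ra ca] /andP[sa da].
  have i1 := idx_bound sa da; have m := ps_mono a sr.
  have L1 : nth 0 (wordf 1 b) (ps a s + (nth 0 a s - d.+1)) <= k by rewrite w_le //; lia.
  have L2 : ~~ (nth 0 (wordf 1 b) (ps a r + (nth 0 a r - c.+1)) <= k) by rewrite w_le //; lia.
  by rewrite -ltnNge in L2; apply: leq_ltn_trans L1 L2.
Qed.

Lemma FSSF_slide n (a : n.-tuple nat) (b : seq nat) :
  sumn b = sumn a -> FSSF a (fillb a (wordf 1 b)) ->
  dom_ge b a /\ (forall x, PS a x -> PS b x).
Proof.
move=> Sb [[Hsh Hpos Hdec Hcol Htri] Hfirst Hstr].
have sT : size (wordf 1 b) = sumn a by rewrite size_wordf.
split.
  move=> i Hi; rewrite -/(ps a i).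
  case: (posnP (ps a i)) => [-> //|p0].
  have [s [si sa /andP[j1 j2]]] := @locate a i (ps a i).-1 ltac:(lia).
  have j3 : (ps a i).-1 < sumn a by have := ps_le_sum a i; lia.
  have [s' [c [Hc Ee /andP[k1 k2] Ei]]] := loc_fill sT j3.
  have ss : s' = s.
    apply/eqP; rewrite eqn_leq; apply/andP; split.
    - rewrite leqNgt; apply/negP => h; have := ps_mono a h; lia.
    - rewrite leqNgt; apply/negP => h; have := ps_mono a h; lia.
  subst s'.
  have Hc0 : inD a s 0 by move: (Hc) => /andP[h h0]; rewrite /inD h /=; lia.
  have := row_le Hdec Hc (leq0n c); have := Hfirst _ Hc0; rewrite -Ee.
  rewrite -/(wordf 1 b) => h1 h2.
  have : nth 0 (wordf 1 b) (ps a i).-1 <= i by lia.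
  rewrite w_le; lia.
move=> x [r Hx]; rewrite -/(ps a r) in Hx.
case: (posnP x) => [-> |x0]; first by exists 0; rewrite take0.
case: (ltnP x (sumn a)) => xN; last first.
  by exists (size b); rewrite take_size; have := ps_le_sum a r; lia.
have j3 : x.-1 < sumn a by lia.
have [s1 [c1 [Hc1 E1 /andP[k1 k2] Ei1]]] := loc_fill sT j3.
have [s2 [c2 [Hc2 E2 /andP[l1 l2] Ei2]]] := loc_fill sT xN.
have s12 : s1 < s2.
  have h1 : s1 < r by rewrite ltnNge; apply/negP => h; have := ps_mono a h; lia.
  have h2 : r <= s2 by rewrite leqNgt; apply/negP => h; have := ps_mono a h; lia.
  lia.
have := Hstr _ _ _ _ Hc2 Hc1 s12; rewrite -E1 -E2 => lt.
exists (nth 0 (wordf 1 b) x.-1).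
have e1 := leqnn (nth 0 (wordf 1 b) x.-1); rewrite w_le in e1; last by lia.
have e2 : ~~ (nth 0 (wordf 1 b) x <= nth 0 (wordf 1 b) x.-1) by rewrite -ltnNge.
rewrite w_le in e2; last by lia.
lia.
Qed.

Lemma fill_sorted n (a : n.-tuple nat) T : size T = sumn a -> FSSF a (fillb a T) -> sorted leq T.
Proof.
move=> sT [[Hsh Hpos Hdec Hcol Htri] Hfirst Hstr].
rewrite sorted_pairwise; last by move=> ???; apply: leq_trans.
apply/(pairwiseP 0) => i j; rewrite !inE => Hi Hj ij.
rewrite sT in Hi Hj.
have [s1 [c1 [Hc1 E1 /andP[k1 k2] Ei1]]] := loc_fill sT Hi.
have [s2 [c2 [Hc2 E2 /andP[l1 l2] Ei2]]] := loc_fill sT Hj.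
rewrite E1 E2.
case: (ltngtP s1 s2) => h.
- by apply: ltnW; apply: Hstr.
- by have := leq_trans (leq_trans l2 (ps_mono a h)) (leq_trans k1 (ltnW ij)); rewrite ltnn.
- move: h Hc2 E2 l1 l2 Ei2 => <- Hc2 E2 l1 l2 Ei2; apply: (row_le Hdec Hc1); move: (Hc1) (Hc2) => /andP[_ q1] /andP[_ q2]; lia.
Qed.

Lemma fill_range n (a : n.-tuple nat) T : size T = sumn a -> FSSF a (fillb a T) ->
  forall x, x \in T -> 0 < x <= n.
Proof.
move=> sT [[Hsh Hpos Hdec Hcol Htri] Hfirst Hstr] x xT.
have Hi : index x T < sumn a by rewrite -sT index_mem.
have [s [c [Hc E _ _]]] := loc_fill sT Hi.
rewrite nth_index // in E; rewrite E Hpos //=.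
have Hc0 : inD a s 0 by move: (Hc) => /andP[h h0]; rewrite /inD h /=; lia.
have := row_le Hdec Hc (leq0n c); have := Hfirst _ Hc0.
move: Hc => /andP[]; rewrite size_tuple; lia.
Qed.

Lemma count_rev_flatten (S : filling) x :
  count_mem x (flatten (map rev S)) = count_mem x (flatten S).
Proof. by rewrite !count_flatten -map_comp; congr sumn; apply: eq_map => s /=; rewrite count_rev. Qed.

Lemma FSSF_fill_self n (a : n.-tuple nat) S : FSSF a S ->
  fillb a (flatten (map rev S)) = S /\ size (flatten (map rev S)) = sumn a.
Proof.
move=> [[[sS Hr] _ _ _ _] _ _].
have Hsh : shape (map rev S) = a.
  apply: (@eq_from_nth _ 0); first by rewrite /shape !size_map sS size_tuple.
  move=> i; rewrite /shape !size_map => Hi.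
  rewrite (nth_map [::]) ?size_map // (nth_map [::]) // size_rev Hr //.
  by rewrite -sS.
split; last by rewrite size_flatten Hsh.
by rewrite /fillb -{1}Hsh flattenK (mapK revK).
Qed.

Lemma wt_word n (a : n.-tuple nat) S : FSSF a S ->
  flatten (map rev S) = wordf 1 (val (wt n S)).
Proof.
move=> FS; have [E sT] := FSSF_fill_self FS.
set T := flatten (map rev S) in E sT *.
have FT : FSSF a (fillb a T) by rewrite E.
have R := fill_range sT FT.
apply: (sorted_eq leq_trans anti_leq); [exact: fill_sorted FT | exact: w_sorted |].
apply/allP => x _; apply/eqP; rewrite count_wordf.
case: (posnP x) => [x0|xp].
  by rewrite x0 /=; apply/count_memPn; apply/negP => /R; lia.
case: (leqP x n) => xn.
  have h : x - 1 < n by lia.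
  rewrite -[x - 1]/(nat_of_ord (Ordinal h)) -mnm_nth mnmE /= count_rev_flatten.
  by have -> : (x - 1).+1 = x by lia.
rewrite nth_default; last by rewrite size_tuple; lia.
by apply/count_memPn; apply/negP => /R; lia.
Qed.

Lemma wt_fill n (a : n.-tuple nat) (b : 'X_{1..n}) : sumn (val b) = sumn a ->
  wt n (fillb a (wordf 1 (val b))) = b.
Proof.
move=> Sb; apply/mnmP => i; rewrite mnmE count_rev_flatten reshapeKr; last first.
  by rewrite size_wordf Sb.
by rewrite count_wordf /= subn1 /= (mnm_nth 0).
Qed.

Lemma slide_iff n (a : n.-tuple nat) (b : 'X_{1..n}) :
  slide_cond a b <-> [/\ dom_ge (val b) a, sumn (val b) = sumn a & forall x, PS a x -> PS (val b) x].
Proof.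
rewrite /slide_cond; split.
  move/asboolP => [Hd /(refines_iff (flat_pos _) (flat_pos _)) [Hs Hp]].
  split => //; first by move: Hs; rewrite !sumn_flat.
  by move=> x /ps_flat /Hp /ps_flat.
move=> [Hd Hs Hp]; apply/asboolP; split => //.
apply/(refines_iff (flat_pos _) (flat_pos _)); split; first by rewrite !sumn_flat.
by move=> x /ps_flat /Hp /ps_flat.
Qed.

Theorem proposition2p9 (n : nat) (a : n.-tuple nat) :
  exists L : seq filling,
    [/\ uniq L,
        (forall S : filling, S \in L <-> FSSF a S)
      & slide_poly a = (\sum_(S <- L) 'X_[wt n S])%R].
Proof.
pose P := [pred b : 'X_{1..n < (sumn a).+1} | slide_cond a b].
pose F := fun b : 'X_{1..n < (sumn a).+1} => fillb a (wordf 1 (val (bmnm b))).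
have Hwt : forall b, b \in enum P -> wt n (F b) = bmnm b.
  move=> b; rewrite mem_enum inE => /slide_iff [_ Hs _]; exact: wt_fill.
exists (map F (enum P)); split.
- rewrite map_inj_in_uniq ?enum_uniq // => b1 b2 H1 H2 E.
  have := congr1 (wt n) E; rewrite Hwt // Hwt // => E2.
  by apply: val_inj.
- move=> S; split.
    move=> /mapP [b]; rewrite mem_enum inE => /slide_iff [Hd Hs Hp] ->.
    exact: fill_FSSF.
  move=> FS; have [E sT] := FSSF_fill_self FS.
  have W := wt_word FS.
  have Sb : sumn (val (wt n S)) = sumn a by rewrite -(size_wordf 1) -W.
  have Hdeg : mdeg (wt n S) < (sumn a).+1 by rewrite /mdeg -sumnE Sb.
  apply/mapP; exists (BMultinom Hdeg); last by rewrite /F /= -W E.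
  have FS' : FSSF a (fillb a (wordf 1 (val (wt n S)))) by rewrite -W E.
  have [Hd Hp] := FSSF_slide Sb FS'.
  by rewrite mem_enum inE /=; apply/slide_iff; split.
- rewrite big_map /slide_poly -big_enum /=.
  apply: eq_big_seq => b Hb; rewrite Hwt //.
Qed.
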